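(* Under the standing assumptions, the following are equivalent: (i) there exists $\mathbf c\in\mathbb R^n$ with all $c_j>0$, $c_1=1$ and $\mathbf c^T(I-M_0)>\mathbf 0^T$ (componentwise strict), i.e. the value-feasible domain $\Theta^{val}$ has nonempty interior; (ii) $\lambda_{\max}(M_0)<1$; (iii) $\lambda_{\max}(\tilde A+BL)<1$. Moreover, with non-strict inequalities: $\Theta^{val}\neq\emptyset$ $\iff$ $\lambda_{\max}(M_0)\le 1$ $\iff$ $\lambda_{\max}(\tilde A+BL)\le 1$.
   Context: Fix $n\ge 2$. $A$ and $K$ are $n\times n$ entrywise nonnegative real matrices; $\delta_1,\dots,\delta_n\in(0,1]$, $D=K\,\mathrm{diag}(\delta_1,\dots,\delta_n)$, and $\tilde A=A+D$. $L=\mathrm{diag}(l_1,\dots,l_n)$ with all $l_j>0$. $B$ is an $n\times n$ entrywise nonnegative matrix with no zero column. Standing assumption: $\tilde A$ is irreducible and $\lambda_{\max}(\tilde A)<1$, where $\lambda_{\max}(X)$ denotes the spectral radius of a square matrix $X$. $M_0:=L(I-\tilde A)^{-1}B$. Vector inequalities are componentwise. The value-feasible domain is $\Theta^{val}:=\{\mathbf c\in\mathbb R^n:\ c_j>0\ \forall j,\ c_1=1,\ \mathbf c^T(I-M_0)\ge \mathbf 0^T\}$. *)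

(* Defs.v *)
From HB Require Import structures.
From mathcomp Require Import all_boot all_order all_algebra.
From mathcomp Require Import complex.
Set Implicit Arguments. Unset Strict Implicit. Unset Printing Implicit Defensive.
Import Order.TTheory GRing.Theory Num.Theory.
Local Open Scope ring_scope.

Section Defs.
Variable R : rcfType.

Definition nonneg_mx m n (X : 'M[R]_(m, n)) : Prop := forall i j, 0 <= X i j.

Definition irreducible_mx n (X : 'M[R]_n) : Prop :=
  forall i j : 'I_n, connect (fun a b => 0 < X a b) i j.

(* the (multiset of) eigenvalues of a real square matrix, as complex numbers:
   the roots of its characteristic polynomial over R[i] *)
Definition eigenvalues_C n (X : 'M[R]_n) : seq R[i] :=
  proj1_sig (closed_field_poly_normal (char_poly (map_mx (real_complex R) X))).

Definition spectral_radius n (X : 'M[R]_n) : R :=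
  \big[Num.max/0]_(z <- eigenvalues_C X) Normc.normc z.

Definition no_zero_column m n (X : 'M[R]_(m, n)) : Prop :=
  forall j, exists i, X i j != 0.

End Defs.

(* Main.v *)
Require Import Defs.
From HB Require Import structures.
From mathcomp Require Import all_boot all_order all_algebra.
From mathcomp Require Import complex.
From mathcomp Require Import polyrcf ring lra.
Import Order.TTheory GRing.Theory Num.Theory.
Local Open Scope ring_scope.

Section BM.
Variable R : realDomainType.
Variable I : eqType.
Implicit Types (s : seq I) (F : I -> R).

Lemma bm_ge0 s F : 0 <= \big[Num.max/0]_(z <- s) F z.
Proof. by elim: s => [|a s IH]; rewrite ?big_nil ?big_cons // le_max IH orbT. Qed.

Lemma bm_ge s F x : x \in s -> F x <= \big[Num.max/0]_(z <- s) F z.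
Proof.
elim: s => [//|a s IH]; rewrite inE big_cons le_max => /orP[/eqP->|/IH->];
  by rewrite ?lexx ?orbT.
Qed.

Lemma bm_le s F c : 0 <= c -> (forall x, x \in s -> F x <= c) ->
  \big[Num.max/0]_(z <- s) F z <= c.
Proof.
elim: s => [|a s IH] c0 H; rewrite ?big_nil ?big_cons // ge_max H ?mem_head //=.
by apply: IH => // x xs; apply: H; rewrite inE xs orbT.
Qed.

Lemma bm_lt s F c : 0 < c -> (forall x, x \in s -> F x < c) ->
  \big[Num.max/0]_(z <- s) F z < c.
Proof.
elim: s => [|a s IH] c0 H; rewrite ?big_nil ?big_cons // gt_max H ?mem_head //=.
by apply: IH => // x xs; apply: H; rewrite inE xs orbT.
Qed.
End BM.

Section Spec.
Context {R : rcfType}.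
Local Notation toC := (real_complex R).

Lemma eigC_root n (X : 'M[R]_n) z :
  (z \in eigenvalues_C X) = root (char_poly (map_mx toC X)) z.
Proof.
rewrite /eigenvalues_C; case: closed_field_poly_normal => s /= Hs.
by rewrite Hs (monicP (char_poly_monic _)) scale1r root_prod_XsubC.
Qed.

Lemma char_poly_tr (F : comNzRingType) n (X : 'M[F]_n) :
  char_poly X^T = char_poly X.
Proof.
rewrite /char_poly -det_tr; congr (\det _).
by apply/matrixP => i j; rewrite !mxE eq_sym.
Qed.

Lemma sr_tr n (X : 'M[R]_n) : spectral_radius X^T = spectral_radius X.
Proof.
rewrite /spectral_radius /eigenvalues_C -map_trmx char_poly_tr.
done.
Qed.

Lemma normcR (t : R) : Normc.normc (t%:C)%C = `|t|.
Proof. by rewrite /Normc.normc /= expr0n /= addr0 sqrtr_sqr. Qed.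

Lemma normcE (z : R[i]) : `|z| = (Normc.normc z)%:C%C.
Proof. by case: z. Qed.

Lemma root_sr n (X : 'M[R]_n) t : root (char_poly X) t -> `|t| <= spectral_radius X.
Proof.
move=> rt; rewrite -normcR; apply: bm_ge.
by rewrite eigC_root -map_char_poly fmorph_root.
Qed.

End Spec.


Section Coll.
Context {R : rcfType}.
Local Notation toC := (real_complex R).

Lemma collatz n (N : 'M[R]_n) (y : 'rV[R]_n) s :
  nonneg_mx N -> (forall j, 0 < y 0 j) -> 0 <= s ->
  (forall j, (y *m N) 0 j <= s * y 0 j) -> spectral_radius N <= s.
Proof.
move=> N0 y0 s0 Hy; apply: bm_le => // z.
rewrite eigC_root -char_poly_tr -eigenvalue_root_char.
case/eigenvalueP => v Hv vN0.
pose a j := `|v 0 j|.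
have Hi i : `|z| * a i <= \sum_j a j * (N i j)%:C%C.
  have -> : `|z| * a i = `|\sum_j v 0 j * (N i j)%:C%C|.
    rewrite -normrM; congr `|_|.
    have /rowP/(_ i) := Hv; rewrite !mxE => <-.
    by apply: eq_bigr => j _; rewrite !mxE.
  apply: le_trans (ler_norm_sum _ _ _) _; apply: ler_sum => j _.
  by rewrite normrM [`|(N i j)%:C%C|]ger0_norm // ler0c.
have [i0 vi0] : exists i, v 0 i != 0.
  apply/existsP; move: vN0; apply: contraLR => /existsPn H.
  rewrite negbK; apply/eqP/rowP => j; rewrite mxE; apply/eqP; exact: negPn (H j).
have Sp : 0 < \sum_i (y 0 i)%:C%C * a i.
  rewrite (bigD1 i0) //=; apply: (@lt_le_trans _ _ ((y 0 i0)%:C%C * a i0)).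
    by rewrite mulr_gt0 ?normr_gt0 // ltcR.
  by rewrite lerDl sumr_ge0 // => k _; rewrite mulr_ge0 ?normr_ge0 // ler0c ltW //.
have E : \sum_i (y 0 i)%:C%C * \sum_j a j * (N i j)%:C%C
       = \sum_j a j * ((y *m N) 0 j)%:C%C.
  rewrite (eq_bigr (fun i => \sum_j (y 0 i)%:C%C * (a j * (N i j)%:C%C))); last first.
    by move=> i _; rewrite mulr_sumr.
  rewrite exchange_big; apply: eq_bigr => j _; rewrite !mxE rmorph_sum mulr_sumr.
  by apply: eq_bigr => i _; rewrite rmorphM /=; ring.
have key : `|z| * \sum_i (y 0 i)%:C%C * a i <= s%:C%C * \sum_i (y 0 i)%:C%C * a i.
  rewrite !mulr_sumr; apply: (@le_trans _ _ (\sum_i (y 0 i)%:C%C * (\sum_j a j * (N i j)%:C%C))).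
    apply: ler_sum => i _; rewrite mulrCA; apply: ler_wpM2l; first by rewrite ler0c ltW.
    exact: Hi.
  rewrite E; apply: ler_sum => j _.
  apply: (@le_trans _ _ (a j * (s * y 0 j)%:C%C)).
    by apply: ler_wpM2l; [exact: normr_ge0 | rewrite lecR; exact: Hy].
  rewrite rmorphM /= le_eqVlt; apply/orP; left; apply/eqP; ring.
rewrite (ler_pM2r Sp) in key. move: key; case: z {Hv Hi E} => a1 b1; rewrite normc_def lecR /Normc.normc /=. done.
Qed.

Lemma collatz_lt n (N : 'M[R]_n) (y : 'rV[R]_n) s :
  nonneg_mx N -> (forall j, 0 < y 0 j) -> 0 < s ->
  (forall j, (y *m N) 0 j < s * y 0 j) -> spectral_radius N < s.
Proof.
move=> N0 y0 s0 Hy.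
pose s' := \big[Num.max/0]_(j <- index_enum 'I_n) ((y *m N) 0 j / y 0 j).
apply: (@le_lt_trans _ _ s').
  apply: (@collatz n N y s' N0 y0); first exact: bm_ge0. move=> j.
  rewrite -ler_pdivrMr // /s'; apply: (@bm_ge R _ (index_enum _) (fun j => (y *m N) 0 j / y 0 j)); exact: mem_index_enum.
apply: bm_lt => // j _; rewrite ltr_pdivrMr //; exact: Hy.
Qed.

End Coll.


Section Core.
Context {R : rcfType}.
Context {n : nat}.
Implicit Types (N : 'M[R]_n).

Lemma AmE N u (v : 'cV[R]_n) i :
  ((u%:M - N) *m v) i 0 = u * v i 0 - (N *m v) i 0.
Proof. by rewrite mulmxBl mul_scalar_mx !mxE. Qed.

Lemma ML N u (p v : 'cV[R]_n) :
  nonneg_mx N -> (forall i, 0 < p i 0) ->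
  (forall i, 0 < ((u%:M - N) *m p) i 0) ->
  (forall i, 0 <= ((u%:M - N) *m v) i 0) -> forall i, 0 <= v i 0.
Proof.
move=> N0 p0 Ap Av.
case: (pickP (fun i => v i 0 < 0)) => [k vk | H]; last by move=> i; rewrite leNgt H.
pose F i := v i 0 / p i 0.
case: (@arg_minP _ _ _ k xpredT F isT) => m _ Hm.
have Fk : F k < 0 by rewrite /F pmulr_llt0 ?invr_gt0.
have Fm : F m < 0 by apply: le_lt_trans (Hm k isT) Fk.
pose w := v - F m *: p.
have Ew : ((u%:M - N) *m w) m 0 = ((u%:M - N) *m v) m 0 - F m * ((u%:M - N) *m p) m 0.
  by rewrite mulmxBr -scalemxAr !mxE.
have wm : w m 0 = 0 by rewrite !mxE /F divfK ?subrr // gt_eqF.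
have w0 j : 0 <= w j 0.
  by rewrite !mxE subr_ge0 -ler_pdivlMr //; exact: (Hm j isT).
have L1 : ((u%:M - N) *m w) m 0 <= 0.
  rewrite AmE wm mulr0 sub0r oppr_le0 !mxE sumr_ge0 // => j _.
  by rewrite mulr_ge0.
have L2 : 0 < ((u%:M - N) *m w) m 0.
  rewrite Ew; have := Av m; have := Ap m; move: Fm; nra.
by have := lt_le_trans L2 L1; rewrite ltxx.
Qed.


Definition qv N : 'cV[{poly R}]_n := \adj (char_poly_mx N) *m const_mx 1.
Definition ev (u : R) (v : 'cV[{poly R}]_n) : 'cV[R]_n := map_mx (horner_eval u) v.

Lemma ev_cpmx N u : map_mx (horner_eval u) (char_poly_mx N) = u%:M - N.
Proof.
apply/matrixP => i j; rewrite !mxE horner_evalE hornerD hornerN hornerMn hornerX hornerC.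
done.
Qed.

Lemma ev_mul N u (v : 'cV_n) :
  ev u (char_poly_mx N *m v) = (u%:M - N) *m ev u v.
Proof. by rewrite /ev map_mxM ev_cpmx. Qed.

Lemma cp_ev N u : (char_poly N).[u] = \det (u%:M - N).
Proof. by rewrite -ev_cpmx det_map_mx. Qed.

Lemma qv_eq N : char_poly_mx N *m qv N = const_mx (char_poly N).
Proof.
rewrite /qv mulmxA mul_mx_adj mul_scalar_mx; apply/matrixP=> i j.
by rewrite !mxE mulr1.
Qed.

Lemma evE u (v : 'cV[{poly R}]_n) i : ev u v i 0 = (v i 0).[u].
Proof. by rewrite mxE. Qed.

Lemma qv_ev N u i : ((u%:M - N) *m ev u (qv N)) i 0 = (char_poly N).[u].
Proof. by rewrite -ev_mul qv_eq evE mxE. Qed.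

Lemma LL N u : nonneg_mx N -> 0 < u -> 0 < (char_poly N).[u] ->
  (forall i, 0 <= ev u (qv N) i 0) -> forall i, 0 < ev u (qv N) i 0.
Proof.
move=> N0 u0 d0 q0 i.
have := qv_ev N u i; rewrite AmE => E.
have : 0 < u * ev u (qv N) i 0.
  have -> : u * ev u (qv N) i 0 = (char_poly N).[u] + (N *m ev u (qv N)) i 0.
    by rewrite -E; ring.
  apply: (lt_le_trans d0); rewrite lerDl mxE sumr_ge0 // => j _; exact: mulr_ge0 (N0 _ _) (q0 _).
by rewrite pmulr_rgt0.
Qed.

Lemma rowsum_le N i : nonneg_mx N -> \sum_j N i j <= \sum_k \sum_j N k j.
Proof.
move=> N0; rewrite [X in _ <= X](bigD1 i) //= lerDl sumr_ge0 // => k _.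
by rewrite sumr_ge0.
Qed.

Lemma coreA N u1 : nonneg_mx N -> 0 < u1 ->
  (forall t, u1 <= t -> ~~ root (char_poly N) t) ->
  forall u, u1 <= u -> 0 < (char_poly N).[u] /\ forall i, 0 < (qv N i 0).[u].
Proof.
move=> N0 u10 nr.
set cp := char_poly N.
have lc : lead_coef cp = 1 by apply/monicP; apply: char_poly_monic.
have [T0 HT0] : exists T0, forall x, T0 <= x -> lead_coef cp <= cp.[x].
  by apply: poly_pinfty_gt_lc; rewrite lc.
have dpos u : u1 <= u -> 0 < cp.[u].
  move=> hu; rewrite ltNge; apply/negP => hneg.
  have hx : 1 <= cp.[Num.max u T0] by rewrite -lc HT0 // le_max lexx orbT.
  have hab : u <= Num.max u T0 by rewrite le_max lexx.
  have hp : cp.[u] <= 0 <= cp.[Num.max u T0].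
    by rewrite hneg /=; exact: le_trans ler01 hx.
  have [r /andP[hr _] rr] := poly_ivt hab hp.
  by move: (nr r (le_trans hu hr)); rewrite rr.
pose T := Num.max u1 (1 + \sum_k \sum_j N k j).
have big u : T <= u -> forall i, 0 < (qv N i 0).[u].
  move=> hu i; rewrite -evE; apply: LL => //.
  - by apply: lt_le_trans u10 (le_trans _ hu); rewrite le_max lexx.
  - by apply: dpos; apply: le_trans hu; rewrite le_max lexx.
  apply: (@ML N u (const_mx 1)) => [//|k|k|k]; first by rewrite mxE.
    rewrite AmE !mxE mulr1 subr_gt0.
    apply: (@le_lt_trans _ _ (\sum_k0 \sum_j N k0 j)).
      apply: le_trans _ (rowsum_le N k N0); apply: ler_sum => j _; by rewrite ?mxE ?mulr1.
    apply: lt_le_trans hu; rewrite lt_max; apply/orP; right; rewrite ltrDr //.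
  rewrite qv_ev ltW //; apply: dpos; apply: le_trans hu; rewrite le_max lexx //.
have u1T : u1 <= T by rewrite le_max lexx.
pose Q := \prod_(i < n) qv N i 0.
have QT : 0 < Q.[T] by rewrite horner_prod prodr_gt0 // => i _; apply: big.
have rootQ x : (forall i, 0 < (qv N i 0).[x]) -> ~~ root Q x.
  by move=> H; rewrite rootE horner_prod gt_eqF // prodr_gt0.
have G a : u1 <= a -> a <= T -> (forall x, x \in `]a, T[ -> ~~ root Q x) -> forall i, 0 < (qv N i 0).[a].
  move=> ha haT nQ i; rewrite -evE; apply: LL => //.
  - exact: lt_le_trans u10 ha.
  - exact: dpos.
  move=> k; rewrite evE leNgt; apply/negP => hk.
  have [x xin rx] := @poly_ivtoo _ (qv N k 0) a T haT
    (ltac:(by rewrite pmulr_llt0 ?(big T (lexx _) k))).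
  move: (nQ x xin); rewrite rootE horner_prod; apply/negP; rewrite negbK.
  by apply/prodf_eq0; exists k => //; move: rx; rewrite rootE.
move=> u hu; split; first exact: dpos.
have [huT|hTu] := leP T u; first exact: big.
case: (prev_rootP Q u T) => [Q0|y nQ0 Qy yin nr'|c nQ0 _ nr'].
- by move: QT; rewrite Q0 horner0 ltxx.
- exfalso; move: yin; rewrite in_itv /= => /andP[uy yT].
  have := rootQ y (G y (le_trans hu (ltW uy)) (ltW yT) nr').
  by rewrite rootE Qy eqxx.
- exact: G hu (ltW hTu) nr'.
Qed.

End Core.


Section Core2.
Context {R : rcfType}.
Context {n : nat}.
Implicit Types (N : 'M[R]_n).

Lemma coreA_inv N u : nonneg_mx N -> 0 < u ->
  (forall t, u <= t -> ~~ root (char_poly N) t) ->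
  (u%:M - N) \in unitmx /\ nonneg_mx (invmx (u%:M - N)).
Proof.
move=> N0 u0 nr; have [d0 q0] := coreA N u N0 u0 nr u (lexx u).
have Au : (u%:M - N) \in unitmx by rewrite unitmxE unitfE -cp_ev gt_eqF.
split=> // i j.
have := @ML R n N u (ev u (qv N)) (col j (invmx (u%:M - N))) N0.
move=> /(_ _ _ _ i); rewrite mxE; apply.
- by move=> k; rewrite evE.
- by move=> k; rewrite qv_ev.
move=> k; have -> : ((u%:M - N) *m col j (invmx (u%:M - N))) k 0 =
                   ((u%:M - N) *m invmx (u%:M - N)) k j.
  rewrite !mxE; apply: eq_bigr => l _; rewrite mxE; congr (_ * _); by rewrite !mxE.
by rewrite mulmxV // mxE ler0n.
Qed.

Lemma CL (f : {poly R}) s : (forall u, s < u -> 0 < f.[u]) -> 0 <= f.[s].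
Proof.
move=> H; rewrite leNgt; apply/negP => hs.
have hs1 : s <= s + 1 by rewrite lerDl.
have hp : f.[s] * f.[s + 1] < 0 by rewrite pmulr_llt0 // H // ltrDl.
have [x xin rx] := poly_ivtoo hs1 hp.
move: xin; rewrite in_itv /= => /andP[sx _].
by move: (H x sx); rewrite (rootP rx) ltxx.
Qed.

Lemma coreB N s (i0 : 'I_n) : nonneg_mx N -> 0 < s ->
  (forall t, s < t -> ~~ root (char_poly N) t) ->
  exists z : 'cV[R]_n, (forall i, 0 <= z i 0) /\ (exists i, 0 < z i 0) /\
     forall i, (N *m z) i 0 <= s * z i 0.
Proof.
move=> N0 s0 nr.
set cp := char_poly N.
have pos u : s < u -> 0 < cp.[u] /\ forall i, 0 < (qv N i 0).[u].
  move=> su; apply: (coreA N u N0 (lt_trans s0 su)) => [t ut|]; last exact: lexx.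
  exact: nr (lt_le_trans su ut).
have s1 : s < s + 1 by rewrite ltrDl.
pose q k := qv N k 0.
have qn0 k : q k != 0.
  apply/eqP => qk0; have := (pos _ s1).2 k; by rewrite -/(q k) qk0 horner0 ltxx.
pose mu k := mup s (q k).
case: (@arg_minnP _ i0 xpredT mu isT) => k0 _ Hk0.
set m := mu k0.
pose D := ('X - s%:P) ^+ m.
have Dn0 : D != 0 by rewrite expf_neq0 // polyXsubC_eq0.
have dv k : D %| q k by rewrite -mup_geq //; exact: Hk0.
pose r k := q k %/ D.
have qr k : q k = r k * D by rewrite divpK.
have rk0 : ~~ root (r k0) s.
  apply/negP => rr; have : ('X - s%:P) ^+ m.+1 %| q k0.
    by rewrite qr exprS dvdp_mul ?dvdpp // -root_factor_theorem.
  by rewrite -mup_geq // ltnn.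
pose rv := \col_k r k.
have cpm i : (char_poly_mx N *m rv) i 0 * D = cp.
  have E0 : (char_poly_mx N *m qv N) i 0 = cp by rewrite qv_eq mxE.
  rewrite -E0 [in RHS]mxE [in LHS]mxE mulr_suml; apply: eq_bigr => j _.
  by rewrite -mulrA [rv j 0]mxE -qr.
have Ddv : D %| cp by rewrite -(cpm i0) dvdp_mull.
pose h := cp %/ D.
have hD : cp = h * D by rewrite divpK.
have Eh i : (char_poly_mx N *m rv) i 0 = h.
  by apply: (mulIf Dn0); rewrite cpm -hD.
have Dpos u : s < u -> 0 < D.[u].
  by move=> su; rewrite horner_exp hornerXsubC exprn_gt0 // subr_gt0.
pose z := ev s rv.
have zE k : z k 0 = (r k).[s] by rewrite evE mxE.
have z0 k : 0 <= z k 0.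
  rewrite zE; apply: CL => u su; have := (pos u su).2 k.
  by rewrite -/(q k) qr hornerM pmulr_lgt0 // Dpos.
have h0 : 0 <= h.[s].
  apply: CL => u su; have := (pos u su).1.
  by rewrite hD hornerM pmulr_lgt0 // Dpos.
exists z; split=> //; split.
  exists k0; rewrite lt_def z0 andbT zE; exact: rk0.
move=> i; have := ev_mul N s rv; move/matrixP/(_ i 0).
rewrite -/z AmE evE Eh => E.
have : s * z i 0 - (N *m z) i 0 = h.[s] by rewrite -E.
move=> E2; rewrite -subr_ge0 E2 //.
Qed.

End Core2.


Section Aux.
Context {R : rcfType}.

Lemma nn_mul {m k p} {A : 'M[R]_(m, k)} {B : 'M[R]_(k, p)} :
  nonneg_mx A -> nonneg_mx B -> nonneg_mx (A *m B).
Proof. by move=> A0 B0 i j; rewrite mxE sumr_ge0 // => l _; rewrite mulr_ge0. Qed.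

Lemma nn_add {m k} {A B : 'M[R]_(m, k)} :
  nonneg_mx A -> nonneg_mx B -> nonneg_mx (A + B).
Proof. by move=> A0 B0 i j; rewrite mxE addr_ge0. Qed.

Lemma nn_diag {n} {d : 'rV[R]_n} : (forall j, 0 <= d 0 j) -> nonneg_mx (diag_mx d).
Proof. by move=> d0 i j; rewrite mxE mulrn_wge0. Qed.

Lemma nn_tr {n} {A : 'M[R]_n} : nonneg_mx A -> nonneg_mx A^T.
Proof. by move=> A0 i j; rewrite mxE. Qed.

Lemma rowBE {n} (c : 'rV[R]_n) (M : 'M[R]_n) j :
  (c *m (1%:M - M)) 0 j = c 0 j - (c *m M) 0 j.
Proof. by rewrite mulmxBr mulmx1 [LHS]mxE [X in _ + X]mxE. Qed.

Lemma sr_lt_noroot {n} {N : 'M[R]_n} {u} : 0 < u -> spectral_radius N < u ->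
  forall t, u <= t -> ~~ root (char_poly N) t.
Proof.
move=> u0 sr t ut; apply/negP => rt; have := root_sr _ _ _ rt.
rewrite ger0_norm ?(le_trans (ltW u0)) // => H.
by have := lt_le_trans (le_lt_trans H sr) ut; rewrite ltxx.
Qed.

Lemma sr_le_noroot {n} {N : 'M[R]_n} {s} : 0 <= s -> spectral_radius N <= s ->
  forall t, s < t -> ~~ root (char_poly N) t.
Proof.
move=> s0 sr t st; apply/negP => rt; have := root_sr _ _ _ rt.
rewrite ger0_norm ?(le_trans s0 (ltW st)) // => H.
by have := le_lt_trans (le_trans H sr) st; rewrite ltxx.
Qed.

Lemma path_pos {n} {N : 'M[R]_n} {y : 'rV[R]_n} {s} :
  nonneg_mx N -> irreducible_mx N -> (forall j, 0 <= y 0 j) ->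
  (exists i, 0 < y 0 i) -> (forall j, (y *m N) 0 j <= s * y 0 j) ->
  forall j, 0 < y 0 j.
Proof.
move=> N0 irr y0 [i yi] Hy j.
have /connectP [p pth ->] := irr i j.
elim: p i yi pth => [|b p IH] a ya //= /andP[eab pth].
apply: IH pth; rewrite lt_def y0 andbT; apply/eqP => yb0.
have := Hy b; rewrite yb0 mulr0 => H.
have : 0 < (y *m N) 0 b.
  rewrite mxE (bigD1 a) //=; apply: (@lt_le_trans _ _ (y 0 a * N a b)).
    by rewrite mulr_gt0.
  by rewrite lerDl sumr_ge0 // => k _; rewrite mulr_ge0.
by rewrite ltNge H.
Qed.

Lemma posB {n} {B : 'M[R]_n} {w : 'rV[R]_n} : nonneg_mx B -> no_zero_column B ->
  (forall i, 0 < w 0 i) -> forall j, 0 < (w *m B) 0 j.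
Proof.
move=> B0 Bnz w0 j; have [i Bij] := Bnz j.
rewrite mxE (bigD1 i) //=; apply: (@lt_le_trans _ _ (w 0 i * B i j)).
  by rewrite mulr_gt0 // lt_def Bij B0.
by rewrite lerDl sumr_ge0 // => k _; rewrite mulr_ge0 // ltW.
Qed.

End Aux.


Lemma normalize {R : rcfType} {n} (M : 'M[R]_n) (c : 'rV[R]_n) (j1 : 'I_n) (P : R -> bool) :
  (forall j, 0 < c 0 j) -> (forall x a, 0 < a -> P x -> P (a * x)) ->
  (forall j, P ((c *m (1%:M - M)) 0 j)) ->
  exists c' : 'rV[R]_n, (forall j, 0 < c' 0 j) /\ c' 0 j1 = 1 /\
     forall j, P ((c' *m (1%:M - M)) 0 j).
Proof.
move=> c0 HP Hc; exists ((c 0 j1)^-1 *: c); split; last split.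
- by move=> j; rewrite mxE mulr_gt0 ?invr_gt0.
- by rewrite mxE mulVf // gt_eqF.
- by move=> j; rewrite -scalemxAl mxE; apply: HP; rewrite ?invr_gt0.
Qed.

Lemma nn_row {R : rcfType} {n} {w : 'rV[R]_n} : (forall j, 0 <= w 0 j) -> nonneg_mx w.
Proof. by move=> w0 i j; rewrite ord1. Qed.

Theorem mainTheorem3 (R : rcfType) (n : nat) (hn : (1 < n)%N)
  (A K B : 'M[R]_n) (delta : 'rV[R]_n) (l : 'rV[R]_n) :
  nonneg_mx A -> nonneg_mx K -> nonneg_mx B -> no_zero_column B ->
  (forall j, 0 < delta 0 j <= 1) ->
  (forall j, 0 < l 0 j) ->
  let D := K *m diag_mx delta in
  let At := A + D in
  let L := diag_mx l in
  let M0 := L *m invmx (1%:M - At) *m B in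
  let j1 : 'I_n := Ordinal (ltnW hn) in
  irreducible_mx At ->
  spectral_radius At < 1 ->
  ((exists c : 'rV[R]_n, (forall j, 0 < c 0 j) /\ c 0 j1 = 1 /\
       (forall j, 0 < (c *m (1%:M - M0)) 0 j))
    <-> spectral_radius M0 < 1) /\
  (spectral_radius M0 < 1 <-> spectral_radius (At + B *m L) < 1) /\
  ((exists c : 'rV[R]_n, (forall j, 0 < c 0 j) /\ c 0 j1 = 1 /\
       (forall j, 0 <= (c *m (1%:M - M0)) 0 j))
    <-> spectral_radius M0 <= 1) /\
  (spectral_radius M0 <= 1 <-> spectral_radius (At + B *m L) <= 1).
Proof.
move=> A0 K0 B0 Bnz dl l0 D At L M0 j1 irr sr.
have At0 : nonneg_mx At.
  rewrite /At /D; apply: nn_add A0 (nn_mul K0 (nn_diag _)) => j.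
  by have /andP[h _] := dl j; exact: ltW.
have L0 : nonneg_mx L by apply: nn_diag => j; exact: ltW.
have [XU X0] := coreA_inv At 1 At0 ltr01 (sr_lt_noroot ltr01 sr).
set X := invmx (1%:M - At) in XU X0 *.
have H1 : (1%:M - At) *m X = 1%:M := mulmxV XU.
have H2 : X *m (1%:M - At) = 1%:M := mulVmx XU.
have M00 : nonneg_mx M0 := nn_mul (nn_mul L0 X0) B0.
set N := At + B *m L.
have N0 : nonneg_mx N := nn_add At0 (nn_mul B0 L0).
have Nirr : irreducible_mx N.
  move=> i j; apply: (connect_sub _ (irr i j)) => a b hab; apply: connect1.
  have : At a b <= N a b by rewrite [N a b]mxE lerDl; exact: nn_mul B0 L0 a b.
  exact: lt_le_trans hab.
have XE : X = 1%:M + At *m X by rewrite -[1%:M in RHS]H1 mulmxBl mul1mx subrK.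
have wX (w : 'rV_n) : (forall j, 0 <= w 0 j) -> forall j, w 0 j <= (w *m X) 0 j.
  move=> w0 j; rewrite [in X in _ <= X]XE mulmxDr mulmx1 [X in _ <= X]mxE lerDl mulmxA.
  exact: nn_mul (nn_mul (nn_row w0) At0) X0 0 j.
have NE : 1%:M - N = (1%:M - At) - B *m L by rewrite /N opprD addrA.
have IdC (y : 'rV_n) : (y *m B) *m (1%:M - M0) = (y *m (1%:M - N)) *m X *m B.
  rewrite NE mulmxBr mulmx1 [in RHS]mulmxBr !mulmxBl -(mulmxA y (1%:M - At) X) H1 mulmx1.
  by congr (_ - _); rewrite /M0 !mulmxA.
have IdY (z : 'rV_n) : (z *m L *m X) *m (1%:M - N) = (z *m (1%:M - M0)) *m L.
  rewrite NE mulmxBr -(mulmxA (z *m L) X (1%:M - At)) H2 mulmx1.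
  rewrite mulmxBr mulmx1 mulmxBl.
  by congr (_ - _); rewrite /M0 !mulmxA.
have Lrow (w : 'rV_n) j : (w *m L) 0 j = w 0 j * l 0 j by rewrite mul_mx_diag mxE.
have S1 : (exists c : 'rV[R]_n, (forall j, 0 < c 0 j) /\ c 0 j1 = 1 /\
       (forall j, 0 < (c *m (1%:M - M0)) 0 j)) -> spectral_radius M0 < 1.
  case=> c [c0 [_ Hc]]; apply: (collatz_lt _ _ _ _ M00 c0 ltr01) => j.
  by have := Hc j; rewrite rowBE subr_gt0 mul1r.
have S2 : spectral_radius M0 < 1 -> spectral_radius N < 1.
  move=> sM; have [YU Y0] := coreA_inv M0 1 M00 ltr01 (sr_lt_noroot ltr01 sM).
  pose c := const_mx 1 *m invmx (1%:M - M0) : 'rV_n.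
  have cE : c *m (1%:M - M0) = const_mx 1 by rewrite -mulmxA mulVmx // mulmx1.
  have c0 j : 0 <= c 0 j by apply: (nn_mul _ Y0 0 j) => i k; rewrite mxE.
  have cpos j : 0 < c 0 j.
    have := rowBE c M0 j; rewrite cE mxE => E.
    have : 0 <= (c *m M0) 0 j by exact: nn_mul (nn_row c0) M00 0 j.
    move: E; lra.
  pose y := c *m L *m X.
  have yE : y *m (1%:M - N) = const_mx 1 *m L by rewrite IdY cE.
  have ypos j : 0 < y 0 j.
    apply: lt_le_trans (wX _ _ j); first by rewrite Lrow mulr_gt0.
    by move=> k; rewrite Lrow mulr_ge0 // ltW.
  apply: (collatz_lt _ _ _ _ N0 ypos ltr01) => j.
  have := rowBE y N j; rewrite yE Lrow mxE mul1r => E.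
  by rewrite mul1r -subr_gt0 -E l0.
have S3 : spectral_radius N < 1 -> (exists c : 'rV[R]_n, (forall j, 0 < c 0 j) /\ c 0 j1 = 1 /\
       (forall j, 0 < (c *m (1%:M - M0)) 0 j)).
  move=> sN; have [ZU Z0] := coreA_inv N 1 N0 ltr01 (sr_lt_noroot ltr01 sN).
  pose y := const_mx 1 *m invmx (1%:M - N) : 'rV_n.
  have yE : y *m (1%:M - N) = const_mx 1 by rewrite -mulmxA mulVmx // mulmx1.
  have y0 j : 0 <= y 0 j by apply: (nn_mul _ Z0 0 j) => i k; rewrite mxE.
  have ypos j : 0 < y 0 j.
    have := rowBE y N j; rewrite yE mxE => E.
    have : 0 <= (y *m N) 0 j by exact: nn_mul (nn_row y0) N0 0 j.
    move: E; lra.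
  apply: (normalize _ _ _ (fun x => 0 < x)).
  - exact: posB B0 Bnz ypos.
  - by move=> x a a0 x0; rewrite mulr_gt0.
  move=> j; rewrite IdC yE; apply: posB B0 Bnz _ j => k.
  apply: lt_le_trans (wX _ _ k); rewrite ?mxE //.
  by move=> i; rewrite mxE.
have W1 : (exists c : 'rV[R]_n, (forall j, 0 < c 0 j) /\ c 0 j1 = 1 /\
       (forall j, 0 <= (c *m (1%:M - M0)) 0 j)) -> spectral_radius M0 <= 1.
  case=> c [c0 [_ Hc]]; apply: (collatz _ _ _ _ M00 c0 ler01) => j.
  by have := Hc j; rewrite rowBE subr_ge0 mul1r.
have W2 : spectral_radius M0 <= 1 -> spectral_radius N <= 1.
  move=> sM.
  have [z [z0 [[i zi] Hz]]] := coreB M0^T 1 j1 (nn_tr M00) ltr01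
    (fun t t1 => ltac:(rewrite char_poly_tr; exact: sr_le_noroot ler01 sM t t1)).
  pose z' := \row_j z j 0 : 'rV_n.
  have z'E j : (z' *m M0) 0 j = (M0^T *m z) j 0.
    by rewrite !mxE; apply: eq_bigr => k _; rewrite !mxE mulrC.
  have z'0 j : 0 <= z' 0 j by rewrite mxE.
  pose y := z' *m L *m X.
  have y0 j : 0 <= y 0 j.
    apply: le_trans (wX _ _ j); first by rewrite Lrow mulr_ge0 // ltW.
    by move=> k; rewrite Lrow mulr_ge0 // ltW.
  have yi : 0 < y 0 i.
    apply: lt_le_trans (wX _ _ i); first by rewrite Lrow mxE mulr_gt0.
    by move=> k; rewrite Lrow mulr_ge0 // ltW.
  have Hy j : (y *m N) 0 j <= 1 * y 0 j.
    have := rowBE y N j; rewrite IdY Lrow rowBE z'E => E.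
    rewrite mul1r -subr_ge0 -E; apply: mulr_ge0; last exact: ltW (l0 j).
    rewrite subr_ge0 (_ : z' 0 j = z j 0); last by rewrite mxE.
    by have := Hz j; rewrite mul1r.
  have ypos := path_pos N0 Nirr y0 (ex_intro _ i yi) Hy.
  exact: collatz _ _ _ _ N0 ypos ler01 Hy.
have W3 : spectral_radius N <= 1 -> (exists c : 'rV[R]_n, (forall j, 0 < c 0 j) /\ c 0 j1 = 1 /\
       (forall j, 0 <= (c *m (1%:M - M0)) 0 j)).
  move=> sN.
  have [z [z0 [[i zi] Hz]]] := coreB N^T 1 j1 (nn_tr N0) ltr01
    (fun t t1 => ltac:(rewrite char_poly_tr; exact: sr_le_noroot ler01 sN t t1)).
  pose y := \row_j z j 0 : 'rV_n.
  have yE j : (y *m N) 0 j = (N^T *m z) j 0.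
    by rewrite !mxE; apply: eq_bigr => k _; rewrite !mxE mulrC.
  have y0 j : 0 <= y 0 j by rewrite mxE.
  have Hy j : (y *m N) 0 j <= 1 * y 0 j.
    rewrite yE (_ : y 0 j = z j 0); last by rewrite mxE.
    exact: Hz.
  have yi : 0 < y 0 i by rewrite mxE.
  have ypos := path_pos N0 Nirr y0 (ex_intro _ i yi) Hy.
  apply: (normalize _ _ _ (fun x => 0 <= x)).
  - exact: posB B0 Bnz ypos.
  - by move=> x a a0 x0; rewrite mulr_ge0 // ltW.
  move=> j; rewrite IdC; apply: nn_mul (nn_mul _ X0) B0 0 j.
  apply: nn_row => k; rewrite rowBE subr_ge0; have := Hy k; rewrite mul1r.
  done.
split; first by split; [exact: S1 | move=> h; exact: S3 (S2 h)].
split; first by split; [exact: S2 | move=> h; exact: S1 (S3 h)].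
split; first by split; [exact: W1 | move=> h; exact: W3 (W2 h)].
by split; [exact: W2 | move=> h; exact: W1 (W3 h)].
Qed.
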